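(* Let $\mathbf a=\{a_1,\dots,a_A\}$, $\mathbf b=\{b_1,\dots,b_B\}$, $\mathbf c=\{c_1,\dots,c_C\}$, $\mathbf d=\{d_1,\dots,d_D\}$ be lists of complex numbers ($A,B,C,D\in\mathbb N_0$, not all zero), $z=e^{i\psi}$, $w=e^{i\eta}$, $\sigma,\tau\in(0,\infty)$, $t\in\mathbb C\setminus\{0\}$, such that for all $i,j,k,l$: $|b_j|<|d_l|<\min\{\tau/|t|,1/\sigma\}$, $|d_la_i|<1/|t|$, and $|a_i|<|c_k|<\min\{\sigma/|t|,1/\tau\}$. Then $$\int_{-\pi}^{\pi}\frac{(\mathbf b\frac\sigma z,t\mathbf a\frac z\sigma;q)_\infty}{(\mathbf d\frac\sigma z,t\mathbf c\frac z\sigma;q)_\infty}d\psi=\int_{-\pi}^{\pi}\frac{(\mathbf a\frac\tau w,t\mathbf b\frac w\tau;q)_\infty}{(\mathbf c\frac\tau w,t\mathbf d\frac w\tau;q)_\infty}d\eta.$$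
   Context: $q\in\mathbb C$, $0<|q|<1$; $(a;q)_\infty=\prod_{j\ge0}(1-aq^j)$; for a list $\mathbf u$ and scalar $y$, $(\mathbf u y;q)_\infty=\prod_i(u_iy;q)_\infty$, and several entries separated by commas denote the product. *)

(* Defs.v *)
From Stdlib Require Import Reals List.
From Coquelicot Require Import Coquelicot.
Open Scope C_scope.

Fixpoint qpoch_part (a q : C) (n : nat) : C :=
  match n with
  | O => 1
  | S m => qpoch_part a q m * (1 - a * Cpow q m)
  end.

(* (a;q)_oo := the limit of the partial products (unique when it exists) *)
Definition qpoch (a q : C) : C :=
  iota (T := C_R_CompleteNormedModule) (fun x : C => filterlim (qpoch_part a q) eventually (locally x)).

(* (u y;q)_oo for a list u : prod_i (u_i y; q)_oo *)
Definition qpochL (u : list C) (y q : C) : C :=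
  fold_right (fun ui acc => qpoch (ui * y) q * acc) 1 u.

Definition eix (th : R) : C := (cos th, sin th).

(* Main.v *)
Require Import Defs.
From Stdlib Require Import Reals List Lra Lia.
From Coquelicot Require Import Coquelicot.
Open Scope C_scope.

Lemma Cmod_sub_le (x y : C) : (Cmod x - Cmod y <= Cmod (x - y))%R.
Proof.
  assert (H := Cmod_triangle (x - y) y).
  replace (x - y + y) with x in H by ring. lra.
Qed.

Lemma Cmod_1_sub_ge (y : C) : (1 - Cmod y <= Cmod (1 - y))%R.
Proof. rewrite <- Cmod_1 at 1. apply Cmod_sub_le. Qed.

Lemma Cmod_1_sub_le (y : C) : (Cmod (1 - y) <= 1 + Cmod y)%R.
Proof.
  unfold Cminus. eapply Rle_trans. apply Cmod_triangle.
  rewrite Cmod_1, Cmod_opp. lra.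
Qed.

Lemma pow_le1 (r : R) n : (0 <= r)%R -> (r < 1)%R -> (0 <= r ^ n <= 1)%R.
Proof.
  intros H0 H1. split. apply pow_le; auto.
  induction n; simpl; [lra|]. 
  assert (0 <= r ^ n)%R by (apply pow_le; auto). nra.
Qed.

Lemma exp_mono (x y : R) : (x <= y)%R -> (exp x <= exp y)%R.
Proof. intros [H|H]. left; apply exp_increasing; auto. subst; lra. Qed.

Section QP.
Variable q : C.
Hypothesis Hq1 : (Cmod q < 1)%R.

Definition Mb (K : R) : R := exp (K / (1 - Cmod q)).

Lemma qp_upper_aux (y : C) n :
  (Cmod (qpoch_part y q n) <= exp (Cmod y * ((1 - Cmod q ^ n) / (1 - Cmod q))))%R.
Proof.
  assert (H0 := Cmod_ge_0 q).
  induction n as [|n IH]; simpl.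
  - rewrite Cmod_1. replace (1 - 1)%R with 0%R by ring.
    unfold Rdiv. rewrite Rmult_0_l, Rmult_0_r, exp_0. lra.
  - rewrite Cmod_mult.
    assert (Hf : (Cmod (1 - y * Cpow q n) <= exp (Cmod y * Cmod q ^ n))%R).
    { eapply Rle_trans. apply Cmod_1_sub_le. rewrite Cmod_mult, Cmod_pow.
      apply exp_ineq1_le. }
    eapply Rle_trans.
    apply Rmult_le_compat; try apply Cmod_ge_0. exact IH. exact Hf.
    rewrite <- exp_plus. right. f_equal. field. lra.
Qed.

Lemma qp_upper (y : C) (K : R) n : (Cmod y <= K)%R ->
  (Cmod (qpoch_part y q n) <= Mb K)%R.
Proof.
  intros HK. assert (H0 := Cmod_ge_0 q). assert (Hy := Cmod_ge_0 y).
  eapply Rle_trans. apply qp_upper_aux. unfold Mb.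
  apply exp_mono. assert (Hp := pow_le1 (Cmod q) n H0 Hq1).
  unfold Rdiv. rewrite <- Rmult_assoc. apply Rmult_le_compat_r.
  apply Rlt_le, Rinv_0_lt_compat; lra. nra.
Qed.

Lemma qp_lower_aux (y : C) (r : R) n : (Cmod y <= r)%R -> (r < 1)%R ->
  (exp (- (Cmod y / (1 - r)) * ((1 - Cmod q ^ n) / (1 - Cmod q))) <= Cmod (qpoch_part y q n))%R.
Proof.
  intros Hyr Hr. assert (H0 := Cmod_ge_0 q). assert (Hy := Cmod_ge_0 y).
  induction n as [|n IH]; simpl.
  - rewrite Cmod_1. replace (1 - 1)%R with 0%R by ring.
    unfold Rdiv. rewrite Rmult_0_l, Rmult_0_r, exp_0. lra.
  - rewrite Cmod_mult.
    set (x := (Cmod y * Cmod q ^ n)%R).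
    assert (Hp := pow_le1 (Cmod q) n H0 Hq1).
    assert (Hx0 : (0 <= x <= r)%R) by (unfold x; split; nra).
    assert (Hf : (exp (- (x / (1 - r))) <= Cmod (1 - y * Cpow q n))%R).
    { eapply Rle_trans. 2: apply Cmod_1_sub_ge. rewrite Cmod_mult, Cmod_pow. fold x.
      assert (He := exp_ineq1_le (x / (1 - r))).
      assert (Hk : (1 <= exp (x / (1 - r)) * (1 - x))%R).
      { eapply Rle_trans. 2: apply Rmult_le_compat_r; [lra|exact He].
        assert (Hd : (x * (1 - x) / (1 - r) >= x)%R).
        { apply Rle_ge. apply (Rmult_le_reg_r (1 - r)); [lra|].
          unfold Rdiv. rewrite Rmult_assoc, Rinv_l by lra. nra. }
        replace ((1 + x / (1 - r)) * (1 - x))%R with (1 - x + x * (1 - x) / (1 - r))%R by (field; lra).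
        lra. }
      rewrite exp_Ropp. apply (Rmult_le_reg_l (exp (x / (1 - r)))). apply exp_pos.
      rewrite Rinv_r. lra. apply Rgt_not_eq, exp_pos. }
    eapply Rle_trans. 2: apply Rmult_le_compat; [apply Rlt_le, exp_pos| apply Rlt_le, exp_pos| exact IH| exact Hf].
    rewrite <- exp_plus. right. f_equal. unfold x. field. lra.
Qed.

Definition Lb (r : R) : R := exp (- (r / (1 - r)) / (1 - Cmod q)).

Lemma Lb_pos r : (0 < Lb r)%R.
Proof. apply exp_pos. Qed.

Lemma qp_lower (y : C) (r : R) n : (Cmod y <= r)%R -> (r < 1)%R ->
  (Lb r <= Cmod (qpoch_part y q n))%R.
Proof.
  intros Hyr Hr. assert (H0 := Cmod_ge_0 q). assert (Hy := Cmod_ge_0 y).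
  eapply Rle_trans. 2: apply qp_lower_aux; eauto. unfold Lb.
  apply exp_mono. assert (Hp := pow_le1 (Cmod q) n H0 Hq1).
  assert (A : (Cmod y / (1 - r) <= r / (1 - r))%R).
  { unfold Rdiv. apply Rmult_le_compat_r; auto. apply Rlt_le, Rinv_0_lt_compat; lra. }
  assert (B : (0 <= Cmod y / (1 - r))%R).
  { unfold Rdiv. apply Rmult_le_pos; auto. apply Rlt_le, Rinv_0_lt_compat; lra. }
  assert (C0 : (0 < / (1 - Cmod q))%R) by (apply Rinv_0_lt_compat; lra).
  assert (HP : (0 <= (1 - Cmod q ^ n) / (1 - Cmod q) <= / (1 - Cmod q))%R).
  { unfold Rdiv. split. apply Rmult_le_pos; lra.
    replace (/ (1 - Cmod q))%R with (1 * / (1 - Cmod q))%R at 2 by ring.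
    apply Rmult_le_compat_r; lra. }
  replace (- (r / (1 - r)) / (1 - Cmod q))%R with (- (r / (1 - r) * / (1 - Cmod q)))%R by (unfold Rdiv; ring).
  set (P := ((1 - Cmod q ^ n) / (1 - Cmod q))%R) in *.
  set (A' := (Cmod y / (1 - r))%R) in *. set (B' := (r / (1 - r))%R) in *.
  nra.
Qed.
End QP.

Lemma Cmod_le_sum (x : C) : (Cmod x <= Rabs (fst x) + Rabs (snd x))%R.
Proof.
  destruct x as [a b]. replace (a, b) with ((a, 0) + (0, b))%C.
  2:{ unfold Cplus; simpl; f_equal; ring. }
  eapply Rle_trans. apply Cmod_triangle.
  replace (Cmod (a,0)) with (Rabs a). replace (Cmod (0,b)) with (Rabs b). simpl. rewrite Rplus_0_r, Rplus_0_l. lra.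
  unfold Cmod; simpl. rewrite <- sqrt_Rsqr_abs. f_equal. unfold Rsqr. ring.
  unfold Cmod; simpl. rewrite <- sqrt_Rsqr_abs. f_equal. unfold Rsqr. ring.
Qed.

Lemma Cmod_ball (z w : C) (e : posreal) : (Cmod (w - z) < e)%R -> @ball C_UniformSpace z e w.
Proof.
  intros H. split; simpl; unfold AbsRing_ball, abs, minus, plus, opp; simpl.
  - eapply Rle_lt_trans. 2: exact H. assert (Hr := Rmax_Cmod (w - z)).
    eapply Rle_trans. 2: exact Hr. apply Rmax_l.
  - eapply Rle_lt_trans. 2: exact H. assert (Hr := Rmax_Cmod (w - z)).
    eapply Rle_trans. 2: exact Hr. apply Rmax_r.
Qed.

Lemma ball_Cmod (z w : C) (e : posreal) : @ball C_UniformSpace z e w -> (Cmod (w - z) < 2 * e)%R.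
Proof.
  intros [H1 H2]. change (Rabs (fst w + - fst z) < e)%R in H1.
  change (Rabs (snd w + - snd z) < e)%R in H2.
  eapply Rle_lt_trans. apply Cmod_le_sum. simpl. lra.
Qed.

Section QP2.
Variable q : C.
Hypothesis Hq1 : (Cmod q < 1)%R.

Lemma qp_step_diff y K m : (Cmod y <= K)%R ->
  (Cmod (qpoch_part y q (S m) - qpoch_part y q m) <= Mb q K * K * Cmod q ^ m)%R.
Proof.
  intros HK. simpl.
  replace (qpoch_part y q m * (1 - y * Cpow q m) - qpoch_part y q m)
    with (- (qpoch_part y q m * y * Cpow q m)) by ring.
  rewrite Cmod_opp, !Cmod_mult, Cmod_pow.
  assert (H1 := qp_upper q Hq1 y K m HK).
  assert (H2 := Cmod_ge_0 y). assert (H3 := pow_le (Cmod q) m (Cmod_ge_0 q)).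
  apply Rmult_le_compat_r; auto. apply Rmult_le_compat; auto. apply Cmod_ge_0.
Qed.

Lemma qp_diff y K n k : (Cmod y <= K)%R ->
  (Cmod (qpoch_part y q (n + k) - qpoch_part y q n) <= Mb q K * K * ((Cmod q ^ n - Cmod q ^ (n + k)) / (1 - Cmod q)))%R.
Proof.
  intros HK. induction k as [|k IH].
  - rewrite Nat.add_0_r. replace (qpoch_part y q n - qpoch_part y q n) with (RtoC 0) by ring.
    rewrite Cmod_0. unfold Rdiv. rewrite Rminus_diag, Rmult_0_l, Rmult_0_r. lra.
  - replace (qpoch_part y q (n + S k) - qpoch_part y q n) with
      ((qpoch_part y q (S (n + k)) - qpoch_part y q (n + k)) + (qpoch_part y q (n + k) - qpoch_part y q n)).
    2:{ rewrite <- plus_n_Sm. ring. }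
    eapply Rle_trans. apply Cmod_triangle.
    eapply Rle_trans. apply Rplus_le_compat. apply (qp_step_diff y K); auto. exact IH.
    right. rewrite <- plus_n_Sm. simpl. field. lra.
Qed.

Definition Cb (K : R) : R := (Mb q K * K / (1 - Cmod q))%R.

Lemma qp_diff' y K n m : (Cmod y <= K)%R -> (n <= m)%nat ->
  (Cmod (qpoch_part y q m - qpoch_part y q n) <= Cb K * Cmod q ^ n)%R.
Proof.
  intros HK Hnm. replace m with (n + (m - n))%nat by lia.
  eapply Rle_trans. apply (qp_diff y K); auto.
  assert (H0 := Cmod_ge_0 q).
  assert (HK0 : (0 <= K)%R) by (eapply Rle_trans; [apply Cmod_ge_0|exact HK]).
  assert (HM : (0 <= Mb q K)%R) by (unfold Mb; apply Rlt_le, exp_pos).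
  assert (Hp := pow_le (Cmod q) (n + (m - n)) H0).
  unfold Cb. unfold Rdiv. 
  assert (0 <= / (1 - Cmod q))%R by (apply Rlt_le, Rinv_0_lt_compat; lra).
  assert (0 <= Mb q K * K)%R by nra.
  replace (Mb q K * K * / (1 - Cmod q) * Cmod q ^ n)%R with (Mb q K * K * (Cmod q ^ n * / (1 - Cmod q)))%R by ring.
  apply Rmult_le_compat_l; auto. apply Rmult_le_compat_r; auto. lra.
Qed.

Lemma pow_tends0 (r : R) : (0 <= r)%R -> (r < 1)%R -> forall eps, (0 < eps)%R -> exists N, forall n, (N <= n)%nat -> (r ^ n < eps)%R.
Proof.
  intros H0 H1 eps He.
  destruct (pow_lt_1_zero r ltac:(rewrite Rabs_pos_eq; auto) eps He) as [N HN].
  exists N. intros n Hn. specialize (HN n Hn). rewrite Rabs_pos_eq in HN; auto.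
  apply pow_le; auto.
Qed.

Lemma qp_cv y : exists L, filterlim (qpoch_part y q) eventually (@locally C_UniformSpace L).
Proof.
  assert (H0 := Cmod_ge_0 q).
  set (K := Cmod y).
  assert (HC : (0 <= Cb K)%R).
  { unfold Cb, Mb. unfold Rdiv. apply Rmult_le_pos. apply Rmult_le_pos. apply Rlt_le, exp_pos. apply Cmod_ge_0.
    apply Rlt_le, Rinv_0_lt_compat; lra. }
  destruct (filterlim_locally_cauchy (U := C_R_CompleteNormedModule) (F := eventually) (qpoch_part y q)) as [Hc _].
  destruct Hc as [L HL].
  - intros eps.
    destruct (pow_tends0 (Cmod q) H0 Hq1 (eps / (2 * (Cb K + 1)))) as [N HN].
    { apply Rdiv_lt_0_compat. apply cond_pos. lra. }
    exists (fun n => (N <= n)%nat). split. exists N; auto.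
    assert (Hb : forall u, (N <= u)%nat -> (Cmod (qpoch_part y q u - qpoch_part y q N) < eps / 2)%R).
    { intros u Hu. eapply Rle_lt_trans. apply (qp_diff' y K); [unfold K; lra|exact Hu].
      specialize (HN N (le_n N)).
      apply Rle_lt_trans with ((Cb K + 1) * Cmod q ^ N)%R.
      apply Rmult_le_compat_r. apply pow_le; auto. lra.
      apply (Rmult_lt_reg_l (/ (Cb K + 1))). apply Rinv_0_lt_compat; lra.
      rewrite <- Rmult_assoc, Rinv_l by lra. 
      replace (/ (Cb K + 1) * (eps / 2))%R with (eps / (2 * (Cb K + 1)))%R by (field; lra). lra. }
    intros u v Hu Hv. apply Cmod_ball.
    replace (qpoch_part y q v - qpoch_part y q u) with ((qpoch_part y q v - qpoch_part y q N) - (qpoch_part y q u - qpoch_part y q N)) by ring.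
    eapply Rle_lt_trans. unfold Cminus at 1. apply Cmod_triangle. rewrite Cmod_opp.
    assert (H1 := Hb u Hu).
    assert (H2 := Hb v Hv). simpl. lra.
  - exists L. exact HL.
Qed.
End QP2.

Section QP3.
Variable q : C.
Hypothesis Hq1 : (Cmod q < 1)%R.

Lemma qpoch_lim y : filterlim (qpoch_part y q) eventually (@locally C_UniformSpace (qpoch y q)).
Proof.
  destruct (qp_cv q Hq1 y) as [L HL].
  unfold qpoch.
  assert (E : iota (T := C_R_CompleteNormedModule) (fun x : C => filterlim (qpoch_part y q) eventually (@locally C_UniformSpace x)) = L).
  { apply (iota_unique (V:=C_R_CompleteNormedModule)).
    - intros z Hz. exact (filterlim_locally_unique (V:=C_R_NormedModule) (qpoch_part y q) z L Hz HL).
    - exact HL. }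
  rewrite E. exact HL.
Qed.

Lemma lim_approx (P : nat -> C) (L : C) : filterlim P eventually (@locally C_UniformSpace L) ->
  forall eps, (0 < eps)%R -> forall N, exists m, (N <= m)%nat /\ (Cmod (P m - L) < eps)%R.
Proof.
  intros HL eps He N.
  destruct (proj1 (filterlim_locally P L) HL (mkposreal (eps/2) ltac:(lra))) as [M HM].
  exists (max N M). split. lia.
  specialize (HM (max N M) ltac:(lia)). apply ball_Cmod in HM. simpl in HM. lra.
Qed.

Lemma lim_le (P : nat -> C) (L z : C) (B : R) N : filterlim P eventually (@locally C_UniformSpace L) ->
  (forall m, (N <= m)%nat -> (Cmod (P m - z) <= B)%R) -> (Cmod (L - z) <= B)%R.
Proof.
  intros HL Hb. apply le_epsilon. intros eps He.
  destruct (lim_approx P L HL eps He N) as [m [Hm Hc]].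
  replace (L - z) with ((P m - z) - (P m - L)) by ring.
  eapply Rle_trans. unfold Cminus at 1. apply Cmod_triangle. rewrite Cmod_opp.
  specialize (Hb m Hm). lra.
Qed.

Lemma lim_ge (P : nat -> C) (L : C) (B : R) N : filterlim P eventually (@locally C_UniformSpace L) ->
  (forall m, (N <= m)%nat -> (B <= Cmod (P m))%R) -> (B <= Cmod L)%R.
Proof.
  intros HL Hb. apply le_epsilon. intros eps He.
  destruct (lim_approx P L HL eps He N) as [m [Hm Hc]].
  assert (H := Cmod_sub_le (P m) L). specialize (Hb m Hm). lra.
Qed.

Lemma qpoch_diff y K n : (Cmod y <= K)%R ->
  (Cmod (qpoch y q - qpoch_part y q n) <= Cb q K * Cmod q ^ n)%R.
Proof.
  intros HK. apply (lim_le _ _ _ _ n (qpoch_lim y)).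
  intros m Hm. apply qp_diff'; auto.
Qed.

Lemma qpoch_upper y K : (Cmod y <= K)%R -> (Cmod (qpoch y q) <= Mb q K)%R.
Proof.
  intros HK. replace (qpoch y q) with (qpoch y q - 0) by ring.
  apply (lim_le _ _ _ _ 0 (qpoch_lim y)).
  intros m Hm. replace (qpoch_part y q m - 0) with (qpoch_part y q m) by ring. apply qp_upper; auto.
Qed.

Lemma qpoch_lower y r : (Cmod y <= r)%R -> (r < 1)%R -> (Lb q r <= Cmod (qpoch y q))%R.
Proof.
  intros HK Hr. apply (lim_ge _ _ _ 0 (qpoch_lim y)).
  intros m Hm. apply qp_lower; auto.
Qed.
End QP3.

Definition UCB (S : C -> Prop) (g : nat -> C -> C) (h : C -> C) :=
  (exists M, forall n x, S x -> (Cmod (g n x) <= M /\ Cmod (h x) <= M)%R) /\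
  (forall eps, (0 < eps)%R -> exists N, forall n x, (N <= n)%nat -> S x -> (Cmod (g n x - h x) < eps)%R).

Definition LB (S : C -> Prop) (g : nat -> C -> C) (h : C -> C) :=
  exists dl, (0 < dl)%R /\ forall n x, S x -> (dl <= Cmod (g n x) /\ dl <= Cmod (h x))%R.

Section UC.
Variable S : C -> Prop.

Lemma UCB_const (c : C) : UCB S (fun _ _ => c) (fun _ => c).
Proof.
  split. exists (Cmod c). intros; split; lra.
  intros eps He. exists 0%nat. intros. replace (c - c) with (RtoC 0) by ring. rewrite Cmod_0. auto.
Qed.

Lemma LB_const (c : C) : c <> 0 -> LB S (fun _ _ => c) (fun _ => c).
Proof.
  intros Hc. exists (Cmod c). split. apply Cmod_gt_0; exact Hc. intros; split; lra.
Qed.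

Lemma UCB_mult g1 h1 g2 h2 : UCB S g1 h1 -> UCB S g2 h2 ->
  UCB S (fun n x => g1 n x * g2 n x) (fun x => h1 x * h2 x).
Proof.
  intros [[M1 HM1] H1] [[M2 HM2] H2].
  set (M1' := Rmax M1 0). set (M2' := Rmax M2 0).
  assert (HM1' : forall n x, S x -> (Cmod (g1 n x) <= M1' /\ Cmod (h1 x) <= M1')%R).
  { intros n x Hx. destruct (HM1 n x Hx). unfold M1'. split; eapply Rle_trans; eauto; apply Rmax_l. }
  assert (HM2' : forall n x, S x -> (Cmod (g2 n x) <= M2' /\ Cmod (h2 x) <= M2')%R).
  { intros n x Hx. destruct (HM2 n x Hx). unfold M2'. split; eapply Rle_trans; eauto; apply Rmax_l. }
  assert (P1 : (0 <= M1')%R) by apply Rmax_r. assert (P2 : (0 <= M2')%R) by apply Rmax_r.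
  split.
  - exists (M1' * M2')%R. intros n x Hx. destruct (HM1' n x Hx), (HM2' n x Hx).
    rewrite !Cmod_mult. split; apply Rmult_le_compat; auto; apply Cmod_ge_0.
  - intros eps He. set (e := (eps / (M1' + M2' + 1))%R).
    assert (He' : (0 < e)%R) by (unfold e; apply Rdiv_lt_0_compat; lra).
    destruct (H1 e He') as [N1 HN1]. destruct (H2 e He') as [N2 HN2].
    exists (max N1 N2). intros n x Hn Hx.
    replace (g1 n x * g2 n x - h1 x * h2 x) with (g1 n x * (g2 n x - h2 x) + (g1 n x - h1 x) * h2 x) by ring.
    eapply Rle_lt_trans. apply Cmod_triangle. rewrite !Cmod_mult.
    destruct (HM1' n x Hx) as [A1 _]. destruct (HM2' n x Hx) as [_ A2].
    assert (B1 := HN1 n x ltac:(lia) Hx). assert (B2 := HN2 n x ltac:(lia) Hx).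
    assert (C1 := Cmod_ge_0 (g1 n x)). assert (C2 := Cmod_ge_0 (h2 x)).
    assert (C3 := Cmod_ge_0 (g2 n x - h2 x)). assert (C4 := Cmod_ge_0 (g1 n x - h1 x)).
    apply Rle_lt_trans with (M1' * e + e * M2')%R.
    apply Rplus_le_compat; apply Rmult_le_compat; lra.
    replace (M1' * e + e * M2')%R with (e * (M1' + M2'))%R by ring.
    unfold e. apply (Rmult_lt_reg_r (M1' + M2' + 1)). lra.
    replace (eps / (M1' + M2' + 1) * (M1' + M2') * (M1' + M2' + 1))%R with (eps * (M1' + M2'))%R by (field; lra).
    nra.
Qed.

Lemma LB_mult g1 h1 g2 h2 : LB S g1 h1 -> LB S g2 h2 ->
  LB S (fun n x => g1 n x * g2 n x) (fun x => h1 x * h2 x).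
Proof.
  intros [d1 [Hd1 H1]] [d2 [Hd2 H2]]. exists (d1 * d2)%R. split. nra.
  intros n x Hx. destruct (H1 n x Hx), (H2 n x Hx). rewrite !Cmod_mult.
  split; apply Rmult_le_compat; lra.
Qed.

Lemma UCB_inv g h : UCB S g h -> LB S g h ->
  UCB S (fun n x => / g n x) (fun x => / h x).
Proof.
  intros [_ H] [dl [Hd Hl]].
  assert (Nz : forall n x, S x -> g n x <> 0 /\ h x <> 0).
  { intros n x Hx. destruct (Hl n x Hx). split; intro E; rewrite E, Cmod_0 in *; lra. }
  split.
  - exists (/ dl)%R. intros n x Hx. destruct (Hl n x Hx), (Nz n x Hx).
    rewrite !Cmod_inv by auto. split; apply Rinv_le_contravar; auto.
  - intros eps He. destruct (H (eps * (dl * dl))%R ltac:(apply Rmult_lt_0_compat; [lra|nra])) as [N HN].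
    exists N. intros n x Hn Hx. destruct (Hl n x Hx) as [L1 L2]. destruct (Nz n x Hx) as [Z1 Z2].
    replace (/ g n x - / h x) with ((h x - g n x) * / (g n x * h x)) by (field; auto).
    rewrite Cmod_mult, Cmod_inv, Cmod_mult by (apply Cmult_neq_0; auto).
    replace (h x - g n x) with (- (g n x - h x)) by ring. rewrite Cmod_opp.
    specialize (HN n x Hn Hx).
    assert (P : (dl * dl <= Cmod (g n x) * Cmod (h x))%R) by (apply Rmult_le_compat; lra).
    apply (Rmult_lt_reg_r (Cmod (g n x) * Cmod (h x))). nra.
    rewrite Rmult_assoc, Rinv_l by nra. nra.
Qed.
End UC.

Section UCq.
Variable q : C.
Hypothesis Hq1 : (Cmod q < 1)%R.
Variable S : C -> Prop.

Lemma UCB_qp (y : C -> C) K : (forall x, S x -> (Cmod (y x) <= K)%R) ->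
  UCB S (fun n x => qpoch_part (y x) q n) (fun x => qpoch (y x) q).
Proof.
  intros HK0.
  assert (HK : forall x, S x -> (Cmod (y x) <= Rmax K 0)%R).
  { intros x Hx. eapply Rle_trans. apply HK0; auto. apply Rmax_l. }
  assert (Kp : (0 <= Rmax K 0)%R) by apply Rmax_r.
  clear HK0. set (K' := Rmax K 0) in *. clearbody K'. clear K. rename K' into K.
  split.
  - exists (Mb q K). intros n x Hx. split. apply qp_upper; auto. apply qpoch_upper; auto.
  - intros eps He.
    assert (HC : (0 <= Cb q K)%R).
    { unfold Cb, Mb.
      unfold Rdiv. apply Rmult_le_pos. apply Rmult_le_pos. apply Rlt_le, exp_pos. auto.
      apply Rlt_le, Rinv_0_lt_compat; lra. }
    destruct (pow_tends0 (Cmod q) (Cmod_ge_0 q) Hq1 (eps / (Cb q K + 1))) as [N HN].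
    { apply Rdiv_lt_0_compat; lra. }
    exists N. intros n x Hn Hx.
    replace (qpoch_part (y x) q n - qpoch (y x) q) with (- (qpoch (y x) q - qpoch_part (y x) q n)) by ring.
    rewrite Cmod_opp. eapply Rle_lt_trans. apply (qpoch_diff q Hq1 (y x) K n); auto.
    specialize (HN n Hn).
    apply Rle_lt_trans with ((Cb q K + 1) * Cmod q ^ n)%R.
    apply Rmult_le_compat_r. apply pow_le, Cmod_ge_0. lra.
    apply (Rmult_lt_reg_l (/ (Cb q K + 1))). apply Rinv_0_lt_compat; lra.
    rewrite <- Rmult_assoc, Rinv_l by lra.
    replace (/ (Cb q K + 1) * eps)%R with (eps / (Cb q K + 1))%R by (field; lra). lra.
Qed.

Lemma LB_qp (y : C -> C) r : (r < 1)%R -> (forall x, S x -> (Cmod (y x) <= r)%R) ->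
  LB S (fun n x => qpoch_part (y x) q n) (fun x => qpoch (y x) q).
Proof.
  intros Hr HK. exists (Lb q r). split. apply Lb_pos.
  intros n x Hx. split. apply qp_lower; auto. apply qpoch_lower; auto.
Qed.

Definition PN (u : list C) (phi : C -> C) (n : nat) (x : C) : C :=
  fold_right (fun ui acc => qpoch_part (ui * phi x) q n * acc) 1 u.

Lemma UCB_PN u phi Kp : (forall x, S x -> (Cmod (phi x) <= Kp)%R) ->
  UCB S (PN u phi) (fun x => qpochL u (phi x) q).
Proof.
  intros HK. induction u as [|ui u IH]; simpl.
  - apply UCB_const.
  - apply (UCB_mult S (fun n x => qpoch_part (ui * phi x) q n) (fun x => qpoch (ui * phi x) q)).
    + apply (UCB_qp (fun x => ui * phi x) (Cmod ui * Kp)). intros x Hx. rewrite Cmod_mult.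
      apply Rmult_le_compat_l. apply Cmod_ge_0. auto.
    + exact IH.
Qed.

Lemma LB_PN u phi : (forall ui, In ui u -> exists r, (r < 1)%R /\ forall x, S x -> (Cmod (ui * phi x) <= r)%R) ->
  LB S (PN u phi) (fun x => qpochL u (phi x) q).
Proof.
  intros H. induction u as [|ui u IH]; simpl.
  - apply LB_const. intro E. injection E. lra.
  - apply (LB_mult S (fun n x => qpoch_part (ui * phi x) q n) (fun x => qpoch (ui * phi x) q)).
    + destruct (H ui (or_introl eq_refl)) as [r [Hr Hx]].
      apply (LB_qp (fun x => ui * phi x) r); auto.
    + apply IH. intros; apply H; right; auto.
Qed.
End UCq.

Notation CK := C_AbsRing.
Notation CV := (AbsRing_NormedModule C_AbsRing).
Notation CU := (AbsRing_UniformSpace C_AbsRing).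

Definition CD (f : C -> C) (z l : C) := forall eps, (0 < eps)%R -> exists dl, (0 < dl)%R /\
  forall y, (Cmod (y - z) < dl)%R -> (Cmod (f y - f z - (y - z) * l) <= eps * Cmod (y - z))%R.

Lemma CD_is_derive f z l : CD f z l -> @is_derive CK CV f z l.
Proof.
  intros H. split. apply is_linear_scal_l.
  intros x Hx. apply (@is_filter_lim_locally_unique CK CV) in Hx. subst x.
  intros eps. destruct (H eps (cond_pos eps)) as [d [Hd H']].
  exists (mkposreal d Hd). intros y Hy. apply H'. exact Hy.
Qed.

Lemma is_derive_CD f z l : @is_derive CK CV f z l -> CD f z l.
Proof.
  intros [_ H] eps He. specialize (H z (fun P HP => HP) (mkposreal eps He)).
  destruct H as [d Hd]. exists d. split. apply cond_pos.
  intros y Hy. apply (Hd y). exact Hy.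
Qed.

Definition Cc (f : C -> C) (z : C) := forall eps, (0 < eps)%R -> exists dl, (0 < dl)%R /\
  forall y, (Cmod (y - z) < dl)%R -> (Cmod (f y - f z) < eps)%R.

Lemma continuous_Cc f z : @continuous CU CU f z -> Cc f z.
Proof.
  intros H eps He. 
  destruct (proj1 (filterlim_locally f (f z)) H (mkposreal eps He)) as [d Hd].
  exists d. split. apply cond_pos. intros y Hy. apply (Hd y). exact Hy.
Qed.

Lemma Cc_continuous f z : Cc f z -> @continuous CU CU f z.
Proof.
  intros H. apply (proj2 (filterlim_locally (U:=CU) f (f z))). intros eps.
  destruct (H eps (cond_pos eps)) as [d [Hd H']]. exists (mkposreal d Hd).
  intros y Hy. apply H'. exact Hy.
Qed.

Lemma CD_Cinv (z : C) : z <> 0 -> CD (fun y => / y) z (- / (z * z)).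
Proof.
  intros Hz eps He.
  assert (Hm : (0 < Cmod z)%R) by exact (proj1 (Cmod_gt_0 z) Hz).
  exists (Rmin (Cmod z / 2) (eps * (Cmod z * Cmod z * Cmod z) / 2)). split.
  { apply Rmin_pos. lra. apply Rdiv_lt_0_compat; [|lra]. repeat apply Rmult_lt_0_compat; auto. }
  intros y Hy.
  assert (Hy1 : (Cmod (y - z) < Cmod z / 2)%R) by (eapply Rlt_le_trans; [exact Hy| apply Rmin_l]).
  assert (Hy2 : (Cmod (y - z) < eps * (Cmod z * Cmod z * Cmod z) / 2)%R) by (eapply Rlt_le_trans; [exact Hy| apply Rmin_r]).
  assert (Hyz : (Cmod z / 2 <= Cmod y)%R).
  { assert (A := Cmod_sub_le z y). replace (z - y) with (- (y - z)) in A by ring. rewrite Cmod_opp in A. lra. }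
  assert (Hy0 : y <> 0) by (intro E; rewrite E, Cmod_0 in Hyz; lra).
  replace (/ y - / z - (y - z) * - / (z * z)) with ((y - z) * (y - z) * / (y * (z * z))) by (field; auto).
  rewrite !Cmod_mult, Cmod_inv, !Cmod_mult by (repeat apply Cmult_neq_0; auto).
  set (e := Cmod (y - z)) in *. assert (He0 : (0 <= e)%R) by apply Cmod_ge_0.
  rewrite Rmult_assoc. rewrite (Rmult_comm eps e). apply Rmult_le_compat_l; auto.
  assert (P : (0 < Cmod y * (Cmod z * Cmod z))%R) by (apply Rmult_lt_0_compat; nra).
  apply (Rmult_le_reg_r (Cmod y * (Cmod z * Cmod z))). exact P.
  rewrite Rmult_assoc, Rinv_l by lra. rewrite Rmult_1_r.
  apply Rle_trans with (eps * (Cmod z / 2 * (Cmod z * Cmod z)))%R.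
  nra. apply Rmult_le_compat_l. lra. apply Rmult_le_compat_r. nra. auto.
Qed.

Definition Hol (U : C -> Prop) (f : C -> C) := exists f' : C -> C,
  forall z, U z -> @is_derive CK CV f z (f' z) /\ @continuous CU CU f' z.

Lemma Hol_cont U f z : Hol U f -> U z -> @continuous CU CU f z.
Proof.
  intros [f' H] Hz. apply (ex_derive_continuous (K:=CK) (V:=CV)). exists (f' z). apply H; auto.
Qed.

Lemma Hol_ext U f g : (forall z, f z = g z) -> Hol U f -> Hol U g.
Proof.
  intros E [f' H]. exists f'. intros z Hz. destruct (H z Hz). split; auto.
  apply (is_derive_ext (K:=CK) (V:=CV) f); auto.
Qed.

Lemma Hol_const U (c : C) : Hol U (fun _ => c).
Proof.
  exists (fun _ => 0). intros z _. split. apply (is_derive_const (K:=CK) (V:=CV) c z).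
  apply (@continuous_const CU CU).
Qed.

Lemma Hol_id U : Hol U (fun z => z).
Proof.
  exists (fun _ => 1). intros z _. split. apply (is_derive_id (K:=CK) z).
  apply (@continuous_const CU CU).
Qed.

Lemma Hol_plus U f g : Hol U f -> Hol U g -> Hol U (fun z => f z + g z).
Proof.
  intros Hf Hg. assert (Hf' := Hf). assert (Hg' := Hg).
  destruct Hf as [f' Hf]. destruct Hg as [g' Hg].
  exists (fun z => f' z + g' z). intros z Hz. destruct (Hf z Hz), (Hg z Hz). split.
  - apply (is_derive_plus (K:=CK) (V:=CV) f g z (f' z) (g' z)); auto.
  - apply (continuous_plus (U:=CU) (K:=CK) (V:=CV) f' g'); auto.
Qed.

Lemma Hol_opp U f : Hol U f -> Hol U (fun z => - f z).
Proof.
  intros [f' Hf]. exists (fun z => - f' z). intros z Hz. destruct (Hf z Hz). split.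
  - apply (is_derive_opp (K:=CK) (V:=CV) f z (f' z)); auto.
  - apply (continuous_opp (U:=CU) (K:=CK) (V:=CV) f'); auto.
Qed.

Lemma Hol_minus U f g : Hol U f -> Hol U g -> Hol U (fun z => f z - g z).
Proof. intros. apply Hol_plus; auto. apply Hol_opp; auto. Qed.

Lemma Hol_mult U f g : Hol U f -> Hol U g -> Hol U (fun z => f z * g z).
Proof.
  intros Hf Hg. assert (Cf : forall z, U z -> @continuous CU CU f z) by (intros; apply (Hol_cont U); auto).
  assert (Cg : forall z, U z -> @continuous CU CU g z) by (intros; apply (Hol_cont U); auto).
  destruct Hf as [f' Hf]. destruct Hg as [g' Hg].
  exists (fun z => f' z * g z + f z * g' z). intros z Hz. destruct (Hf z Hz), (Hg z Hz). split.
  - apply (is_derive_mult (K:=CK) f g z (f' z) (g' z)); auto. intros; apply Cmult_comm.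
  - apply (continuous_plus (U:=CU) (K:=CK) (V:=CV) (fun z => f' z * g z) (fun z => f z * g' z)).
    apply (continuous_mult (U:=CU) (K:=CK) f' g); auto.
    apply (continuous_mult (U:=CU) (K:=CK) f g'); auto.
Qed.

Lemma Hol_inv U f : Hol U f -> (forall z, U z -> f z <> 0) -> Hol U (fun z => / f z).
Proof.
  intros Hf Hnz. assert (Cf : forall z, U z -> @continuous CU CU f z) by (intros; apply (Hol_cont U); auto).
  destruct Hf as [f' Hf].
  exists (fun z => f' z * (- / (f z * f z))). intros z Hz. destruct (Hf z Hz). split.
  - apply (is_derive_comp (K:=CK) (V:=CV) (fun y => / y) f z). 
    apply CD_is_derive, CD_Cinv. auto. auto.
  - apply (continuous_mult (U:=CU) (K:=CK) f' (fun z => - / (f z * f z))); auto.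
    apply (@continuous_comp CU CU CU f (fun y => - / (y * y))); auto.
    apply (continuous_opp (U:=CU) (K:=CK) (V:=CV) (fun y => / (y * y))).
    apply (@continuous_comp CU CU CU (fun y => y * y) (fun y => / y)).
    apply (continuous_mult (U:=CU) (K:=CK) (fun y => y) (fun y => y)); apply (@continuous_id CU).
    apply (ex_derive_continuous (K:=CK) (V:=CV)). eexists. apply CD_is_derive, CD_Cinv.
    apply Cmult_neq_0; auto.
Qed.

Section HolQ.
Variable q : C.
Hypothesis Hq1 : (Cmod q < 1)%R.

Lemma Hol_qp U (y : C -> C) n : Hol U y -> Hol U (fun x => qpoch_part (y x) q n).
Proof.
  intros Hy. induction n as [|n IH]; simpl.
  - apply Hol_const.
  - apply (Hol_mult U (fun x => qpoch_part (y x) q n) (fun x => 1 - y x * Cpow q n)); auto.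
    apply (Hol_minus U (fun _ => 1) (fun x => y x * Cpow q n)). apply Hol_const.
    apply (Hol_mult U y (fun _ => Cpow q n)); auto. apply Hol_const.
Qed.

Lemma Hol_PN U u phi n : Hol U phi -> Hol U (PN q u phi n).
Proof.
  intros Hp. induction u as [|ui u IH]; unfold PN; simpl.
  - apply Hol_const.
  - apply (Hol_mult U (fun x => qpoch_part (ui * phi x) q n) (fun x => PN q u phi n x)); auto.
    apply (Hol_qp U (fun x => ui * phi x)). apply (Hol_mult U (fun _ => ui) phi); auto. apply Hol_const.
Qed.

Lemma qp_nz y n : (Cmod y < 1)%R -> qpoch_part y q n <> 0.
Proof.
  intros Hy. induction n as [|n IH]; simpl.
  - intro E. injection E. lra.
  - apply Cmult_neq_0; auto. intro E.
    assert (A := Cmod_1_sub_ge (y * Cpow q n)). rewrite E, Cmod_0, Cmod_mult, Cmod_pow in A.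
    assert (B := pow_le1 (Cmod q) n (Cmod_ge_0 q) Hq1). assert (C0 := Cmod_ge_0 y).
    nra.
Qed.

Lemma PN_nz u phi n x : (forall ui, In ui u -> (Cmod (ui * phi x) < 1)%R) -> PN q u phi n x <> 0.
Proof.
  intros H. induction u as [|ui u IH]; unfold PN; simpl.
  - intro E. injection E. lra.
  - apply Cmult_neq_0. apply qp_nz. apply H; left; auto. apply IH. intros; apply H; right; auto.
Qed.
End HolQ.

Definition RD (g : R -> C) (x : R) (m : C) := forall eps, (0 < eps)%R -> exists dl, (0 < dl)%R /\
  forall s, (Rabs (s - x) < dl)%R -> (Cmod (g s - g x - RtoC (s - x) * m) <= eps * Rabs (s - x))%R.

Definition Rc (g : R -> C) (x : R) := forall eps, (0 < eps)%R -> exists dl, (0 < dl)%R /\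
  forall s, (Rabs (s - x) < dl)%R -> (Cmod (g s - g x) < eps)%R.

Lemma Cmod_RtoC (r : R) : Cmod (RtoC r) = Rabs r.
Proof. apply Cmod_R. Qed.

Lemma RD_bound g x m : RD g x m -> exists dl, (0 < dl)%R /\
  forall s, (Rabs (s - x) < dl)%R -> (Cmod (g s - g x) <= (Cmod m + 1) * Rabs (s - x))%R.
Proof.
  intros H. destruct (H 1%R Rlt_0_1) as [d [Hd H']]. exists d. split; auto.
  intros s Hs. specialize (H' s Hs).
  replace (g s - g x) with ((g s - g x - RtoC (s - x) * m) + RtoC (s - x) * m) by ring.
  eapply Rle_trans. apply Cmod_triangle. rewrite Cmod_mult, Cmod_RtoC. nra.
Qed.

Lemma RD_Rc g x m : RD g x m -> Rc g x.
Proof.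
  intros H eps He. destruct (RD_bound g x m H) as [d [Hd H']].
  assert (Hm := Cmod_ge_0 m).
  exists (Rmin d (eps / (Cmod m + 2))). split. apply Rmin_pos; auto. apply Rdiv_lt_0_compat; lra.
  intros s Hs. eapply Rle_lt_trans. apply H'. eapply Rlt_le_trans; [exact Hs|apply Rmin_l].
  assert (Hs2 : (Rabs (s - x) < eps / (Cmod m + 2))%R) by (eapply Rlt_le_trans; [exact Hs|apply Rmin_r]).
  apply Rle_lt_trans with ((Cmod m + 2) * Rabs (s - x))%R.
  apply Rmult_le_compat_r. apply Rabs_pos. lra.
  apply (Rmult_lt_reg_l (/ (Cmod m + 2))). apply Rinv_0_lt_compat; lra.
  rewrite <- Rmult_assoc, Rinv_l by lra. replace (/ (Cmod m + 2) * eps)%R with (eps / (Cmod m + 2))%R by (unfold Rdiv; ring). lra.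
Qed.

Lemma RD_comp f g x l m : CD f (g x) l -> RD g x m -> RD (fun s => f (g s)) x (m * l).
Proof.
  intros Hf Hg eps He.
  set (A := (Cmod m + 1)%R). assert (HA : (1 <= A)%R) by (unfold A; assert (H := Cmod_ge_0 m); lra).
  assert (Hl := Cmod_ge_0 l).
  destruct (Hf (eps / (2 * A))%R ltac:(apply Rdiv_lt_0_compat; lra)) as [d1 [Hd1 H1]].
  destruct (Hg (eps / (2 * (Cmod l + 1)))%R ltac:(apply Rdiv_lt_0_compat; lra)) as [d2 [Hd2 H2]].
  destruct (RD_bound g x m Hg) as [d3 [Hd3 H3]].
  exists (Rmin (Rmin d2 d3) (d1 / A)). split.
  { apply Rmin_pos. apply Rmin_pos; auto. apply Rdiv_lt_0_compat; lra. }
  intros s Hs.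
  assert (Hs2 : (Rabs (s - x) < d2)%R) by (eapply Rlt_le_trans; [exact Hs|]; eapply Rle_trans; [apply Rmin_l|apply Rmin_l]).
  assert (Hs3 : (Rabs (s - x) < d3)%R) by (eapply Rlt_le_trans; [exact Hs|]; eapply Rle_trans; [apply Rmin_l|apply Rmin_r]).
  assert (Hs1 : (Rabs (s - x) < d1 / A)%R) by (eapply Rlt_le_trans; [exact Hs|apply Rmin_r]).
  specialize (H3 s Hs3). fold A in H3. specialize (H2 s Hs2).
  assert (Hr := Rabs_pos (s - x)).
  assert (Hgs : (Cmod (g s - g x) < d1)%R).
  { eapply Rle_lt_trans. exact H3. apply (Rmult_lt_reg_l (/ A)). apply Rinv_0_lt_compat; lra.
    rewrite <- Rmult_assoc, Rinv_l by lra. replace (/ A * d1)%R with (d1 / A)%R by (unfold Rdiv; ring). lra. }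
  specialize (H1 (g s) Hgs).
  replace (f (g s) - f (g x) - RtoC (s - x) * (m * l)) with
    ((f (g s) - f (g x) - (g s - g x) * l) + (g s - g x - RtoC (s - x) * m) * l) by ring.
  eapply Rle_trans. apply Cmod_triangle. rewrite (Cmod_mult _ l).
  apply Rle_trans with (eps / 2 * Rabs (s - x) + eps / 2 * Rabs (s - x))%R; [|lra].
  apply Rplus_le_compat.
  - eapply Rle_trans. exact H1.
    apply Rle_trans with (eps / (2 * A) * (A * Rabs (s - x)))%R.
    apply Rmult_le_compat_l. apply Rlt_le, Rdiv_lt_0_compat; lra. exact H3.
    right. field. lra.
  - apply Rle_trans with (eps / (2 * (Cmod l + 1)) * Rabs (s - x) * (Cmod l + 1))%R.
    apply Rmult_le_compat; auto. apply Cmod_ge_0. lra.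
    right. field. lra.
Qed.

Lemma RD_cmul c g x m : RD g x m -> RD (fun s => c * g s) x (c * m).
Proof.
  intros H eps He. assert (Hc := Cmod_ge_0 c).
  destruct (H (eps / (Cmod c + 1))%R ltac:(apply Rdiv_lt_0_compat; lra)) as [d [Hd H']].
  exists d. split; auto. intros s Hs. specialize (H' s Hs).
  replace (c * g s - c * g x - RtoC (s - x) * (c * m)) with (c * (g s - g x - RtoC (s - x) * m)) by ring.
  rewrite Cmod_mult. assert (Hr := Rabs_pos (s - x)).
  apply Rle_trans with ((Cmod c + 1) * (eps / (Cmod c + 1) * Rabs (s - x)))%R.
  apply Rmult_le_compat; auto; try lra. apply Cmod_ge_0.
  right. field. lra.
Qed.

Lemma RD_mulc c g x m : RD g x m -> RD (fun s => g s * c) x (m * c).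
Proof.
  intros H. assert (H2 := RD_cmul c g x m H).
  intros eps He. destruct (H2 eps He) as [d [Hd H']]. exists d; split; auto.
  intros s Hs. specialize (H' s Hs).
  replace (g s * c - g x * c - RtoC (s - x) * (m * c)) with (c * g s - c * g x - RtoC (s - x) * (c * m)) by ring.
  exact H'.
Qed.

Lemma real_approx (f : R -> R) x l : is_derive f x l -> forall eps, (0 < eps)%R -> exists dl, (0 < dl)%R /\
  forall s, (Rabs (s - x) < dl)%R -> (Rabs (f s - f x - (s - x) * l) <= eps * Rabs (s - x))%R.
Proof.
  intros H eps He. apply is_derive_Reals in H.
  destruct (H eps He) as [d Hd]. exists d. split. apply cond_pos.
  intros s Hs. destruct (Req_dec s x) as [E|E].
  - subst. replace (x - x)%R with 0%R by ring. rewrite Rabs_R0. replace (f x - f x - 0 * l)%R with 0%R by ring.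
    rewrite Rabs_R0. lra.
  - specialize (Hd (s - x)%R ltac:(lra) Hs). replace (x + (s - x))%R with s in Hd by ring.
    replace (f s - f x - (s - x) * l)%R with ((s - x) * ((f s - f x) / (s - x) - l))%R by (field; lra).
    rewrite Rabs_mult. rewrite Rmult_comm. apply Rmult_le_compat_r. apply Rabs_pos. lra.
Qed.

Lemma real_approx_inv (f : R -> R) x l : (forall eps, (0 < eps)%R -> exists dl, (0 < dl)%R /\
  forall s, (Rabs (s - x) < dl)%R -> (Rabs (f s - f x - (s - x) * l) <= eps * Rabs (s - x))%R) -> is_derive f x l.
Proof.
  intros H. apply is_derive_Reals. intros eps He.
  destruct (H (eps / 2)%R ltac:(lra)) as [d [Hd H']]. exists (mkposreal d Hd).
  intros h Hh Hhd. specialize (H' (x + h)%R). replace (x + h - x)%R with h in H' by ring.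
  specialize (H' Hhd).
  replace ((f (x + h) - f x) / h - l)%R with ((f (x + h) - f x - h * l) / h)%R by (field; auto).
  unfold Rdiv. rewrite Rabs_mult, Rabs_inv. assert (Rabs h > 0)%R by (apply Rabs_pos_lt; auto).
  apply Rle_lt_trans with (eps / 2 * Rabs h * / Rabs h)%R.
  apply Rmult_le_compat_r. apply Rlt_le, Rinv_0_lt_compat; lra. exact H'.
  field_simplify; lra.
Qed.

Lemma fst_lin (a b m : C) (r : R) : fst (a - b - RtoC r * m) = (fst a - fst b - r * fst m)%R.
Proof. destruct a, b, m; simpl; ring. Qed.
Lemma snd_lin (a b m : C) (r : R) : snd (a - b - RtoC r * m) = (snd a - snd b - r * snd m)%R.
Proof. destruct a, b, m; simpl; ring. Qed.

Lemma RD_of_real (g : R -> C) (x : R) (m : C) : is_derive (fun s => fst (g s)) x (fst m) -> is_derive (fun s => snd (g s)) x (snd m) -> RD g x m.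
Proof.
  intros H1 H2 eps He.
  destruct (real_approx _ _ _ H1 (eps/2)%R ltac:(lra)) as [d1 [Hd1 A1]].
  destruct (real_approx _ _ _ H2 (eps/2)%R ltac:(lra)) as [d2 [Hd2 A2]].
  exists (Rmin d1 d2). split. apply Rmin_pos; auto. intros s Hs.
  specialize (A1 s ltac:(eapply Rlt_le_trans; [exact Hs|apply Rmin_l])).
  specialize (A2 s ltac:(eapply Rlt_le_trans; [exact Hs|apply Rmin_r])).
  eapply Rle_trans. apply Cmod_le_sum. rewrite fst_lin, snd_lin. nra.
Qed.

Lemma RD_to_fst (g : R -> C) (x : R) (m : C) : RD g x m -> is_derive (fun s => fst (g s)) x (fst m).
Proof.
  intros H. apply real_approx_inv. intros eps He. destruct (H eps He) as [d [Hd H']].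
  exists d. split; auto. intros s Hs. specialize (H' s Hs).
  rewrite <- fst_lin. eapply Rle_trans. 2: exact H'. 
  eapply Rle_trans. 2: apply Rmax_Cmod. apply Rmax_l.
Qed.

Lemma RD_to_snd (g : R -> C) (x : R) (m : C) : RD g x m -> is_derive (fun s => snd (g s)) x (snd m).
Proof.
  intros H. apply real_approx_inv. intros eps He. destruct (H eps He) as [d [Hd H']].
  exists d. split; auto. intros s Hs. specialize (H' s Hs).
  rewrite <- snd_lin. eapply Rle_trans. 2: exact H'. 
  eapply Rle_trans. 2: apply Rmax_Cmod. apply Rmax_r.
Qed.

Lemma RD_eix x : RD eix x (Ci * eix x).
Proof.
  apply RD_of_real.
  - unfold eix; simpl. replace (0 * cos x - 1 * sin x)%R with (- sin x)%R by ring. apply is_derive_cos.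
  - unfold eix; simpl. replace (0 * sin x + 1 * cos x)%R with (cos x)%R by ring. apply is_derive_sin.
Qed.

Definition Cc2 (G : R -> R -> C) (x y : R) := forall eps, (0 < eps)%R -> exists dl, (0 < dl)%R /\
  forall u v, (Rabs (u - x) < dl)%R -> (Rabs (v - y) < dl)%R -> (Cmod (G u v - G x y) < eps)%R.

Lemma Cc2_u (g : R -> C) x y : Rc g x -> Cc2 (fun u v => g u) x y.
Proof. intros H eps He. destruct (H eps He) as [d [Hd H']]. exists d. split; auto. Qed.

Lemma Cc2_v (g : R -> C) x y : Rc g y -> Cc2 (fun u v => g v) x y.
Proof. intros H eps He. destruct (H eps He) as [d [Hd H']]. exists d. split; auto. Qed.

Lemma Cc2_mult G1 G2 x y : Cc2 G1 x y -> Cc2 G2 x y -> Cc2 (fun u v => G1 u v * G2 u v) x y.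
Proof.
  intros H1 H2 eps He.
  set (A := (Cmod (G1 x y) + Cmod (G2 x y) + 2)%R).
  assert (P1 := Cmod_ge_0 (G1 x y)). assert (P2 := Cmod_ge_0 (G2 x y)).
  set (e := Rmin 1 (eps / A)).
  assert (HA : (0 < A)%R) by (unfold A; lra).
  assert (He' : (0 < e)%R) by (apply Rmin_pos; [lra|apply Rdiv_lt_0_compat; lra]).
  destruct (H1 e He') as [d1 [Hd1 A1]]. destruct (H2 e He') as [d2 [Hd2 A2]].
  exists (Rmin d1 d2). split. apply Rmin_pos; auto. intros u v Hu Hv.
  assert (B1 := A1 u v ltac:(eapply Rlt_le_trans; [exact Hu|apply Rmin_l]) ltac:(eapply Rlt_le_trans; [exact Hv|apply Rmin_l])).
  assert (B2 := A2 u v ltac:(eapply Rlt_le_trans; [exact Hu|apply Rmin_r]) ltac:(eapply Rlt_le_trans; [exact Hv|apply Rmin_r])).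
  replace (G1 u v * G2 u v - G1 x y * G2 x y) with
    ((G1 u v - G1 x y) * (G2 u v - G2 x y) + (G1 u v - G1 x y) * G2 x y + G1 x y * (G2 u v - G2 x y)) by ring.
  eapply Rle_lt_trans. apply Cmod_triangle. eapply Rle_lt_trans. apply Rplus_le_compat_r. apply Cmod_triangle.
  rewrite !Cmod_mult.
  assert (Q1 := Cmod_ge_0 (G1 u v - G1 x y)). assert (Q2 := Cmod_ge_0 (G2 u v - G2 x y)).
  assert (E1 : (e <= 1)%R) by apply Rmin_l. assert (E2 : (e <= eps / A)%R) by apply Rmin_r.
  assert (E3 : (e * A <= eps)%R).
  { apply Rle_trans with (eps / A * A)%R. apply Rmult_le_compat_r; lra. right; field; lra. }
  apply Rlt_le_trans with (e * A)%R; auto.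
  unfold A. nra.
Qed.

Lemma Cc2_compC (f : C -> C) G x y : Cc f (G x y) -> Cc2 G x y -> Cc2 (fun u v => f (G u v)) x y.
Proof.
  intros Hf HG eps He. destruct (Hf eps He) as [d1 [Hd1 A1]].
  destruct (HG d1 Hd1) as [d2 [Hd2 A2]]. exists d2. split; auto.
Qed.

Lemma Cc2_fst G x y : Cc2 G x y -> continuity_2d_pt (fun u v => fst (G u v)) x y.
Proof.
  intros H eps. destruct (H eps (cond_pos eps)) as [d [Hd A]]. exists (mkposreal d Hd).
  intros u v Hu Hv. specialize (A u v Hu Hv).
  eapply Rle_lt_trans. 2: exact A. eapply Rle_trans. 2: apply Rmax_Cmod.
  eapply Rle_trans. 2: apply Rmax_l. right. f_equal. all: try (destruct (G u v), (G x y); simpl; ring).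
Qed.

Lemma Cc2_snd G x y : Cc2 G x y -> continuity_2d_pt (fun u v => snd (G u v)) x y.
Proof.
  intros H eps. destruct (H eps (cond_pos eps)) as [d [Hd A]]. exists (mkposreal d Hd).
  intros u v Hu Hv. specialize (A u v Hu Hv).
  eapply Rle_lt_trans. 2: exact A. eapply Rle_trans. 2: apply Rmax_Cmod.
  eapply Rle_trans. 2: apply Rmax_r. right. f_equal. all: try (destruct (G u v), (G x y); simpl; ring).
Qed.

Lemma Cc2_v_Rc G x y : Cc2 G x y -> Rc (fun v => G x v) y.
Proof.
  intros H eps He. destruct (H eps He) as [d [Hd A]]. exists d. split; auto.
  intros s Hs. apply A; auto. replace (x - x)%R with 0%R by ring. rewrite Rabs_R0. auto.
Qed.

Lemma Rc_cont_fst (g : R -> C) x : Rc g x -> continuous (fun s => fst (g s)) x.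
Proof.
  intros H. apply (proj2 (filterlim_locally (fun s => fst (g s)) (fst (g x)))). intros eps.
  destruct (H eps (cond_pos eps)) as [d [Hd A]]. exists (mkposreal d Hd).
  intros s Hs. specialize (A s Hs). change (Rabs (fst (g s) - fst (g x)) < eps)%R.
  eapply Rle_lt_trans. 2: exact A. eapply Rle_trans. 2: apply Rmax_Cmod.
  eapply Rle_trans. 2: apply Rmax_l. right. f_equal. all: try (destruct (g s), (g x); simpl; ring).
Qed.

Lemma Rc_cont_snd (g : R -> C) x : Rc g x -> continuous (fun s => snd (g s)) x.
Proof.
  intros H. apply (proj2 (filterlim_locally (fun s => snd (g s)) (snd (g x)))). intros eps.
  destruct (H eps (cond_pos eps)) as [d [Hd A]]. exists (mkposreal d Hd).
  intros s Hs. specialize (A s Hs). change (Rabs (snd (g s) - snd (g x)) < eps)%R.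
  eapply Rle_lt_trans. 2: exact A. eapply Rle_trans. 2: apply Rmax_Cmod.
  eapply Rle_trans. 2: apply Rmax_r. right. f_equal. all: try (destruct (g s), (g x); simpl; ring).
Qed.

Section Comp.
Variable k : C -> R.
Hypothesis Hd : forall g x m, RD g x m -> is_derive (fun s => k (g s)) x (k m).
Hypothesis Hc2 : forall G x y, Cc2 G x y -> continuity_2d_pt (fun u v => k (G u v)) x y.
Hypothesis Hcont : forall g x, Rc g x -> continuous (fun s => k (g s)) x.

Lemma comp_const (h D : R -> R -> C) (c : R -> C) :
  (forall u v, RD (fun s => h s v) u (D u v)) ->
  (forall u v, RD (fun s => c u * h u s) v (D u v)) ->
  (forall u v, Rc (fun s => h u s) v) ->
  (forall u v, Cc2 D u v) ->
  (forall u, h u PI = h u (-PI)%R) ->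
  forall a b, RInt (fun v => k (h a v)) (-PI)%R PI = RInt (fun v => k (h b v)) (-PI)%R PI.
Proof.
  intros HD HDv HRc HC2 Hper.
  set (J := fun u => RInt (fun v => k (h u v)) (-PI)%R PI).
  assert (HJ : forall u, is_derive J u 0%R).
  { intros u.
    assert (E := is_derive_RInt_param (fun u v => k (h u v)) (-PI)%R PI u).
    assert (V : RInt (fun t => Derive (fun u0 => k (h u0 t)) u) (-PI)%R PI = 0%R).
    { rewrite (RInt_ext _ (fun t => k (D u t))).
      2:{ intros t _. apply is_derive_unique. apply Hd. apply HD. }
      apply is_RInt_unique.
      assert (F := is_RInt_derive (fun t => k (c u * h u t)) (fun t => k (D u t)) (-PI)%R PI).
      cbv beta in F. rewrite Hper in F. rewrite minus_eq_zero in F. apply F.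
      - intros t _. apply Hd. apply HDv.
      - intros t _. apply Hcont. apply Cc2_v_Rc. apply HC2. }
    rewrite <- V. apply E.
    - apply filter_forall. intros x0 t _. cbv beta. eexists. apply Hd. apply HD.
    - intros t _. apply continuity_2d_pt_ext with (f := fun u v => k (D u v)).
      intros x y. cbv beta. symmetry. apply is_derive_unique. apply Hd. apply HD.
      apply Hc2. apply HC2.
    - apply filter_forall. intros y. apply (ex_RInt_continuous (V:=R_CompleteNormedModule)). intros z _. apply Hcont. apply HRc. }
  intros a b. change (J a = J b).
  destruct (Rtotal_order a b) as [L|[L|L]].
  - apply (eq_is_derive (V:=R_NormedModule)). intros; apply HJ. exact L.
  - rewrite L; reflexivity.
  - symmetry. apply (eq_is_derive (V:=R_NormedModule)). intros; apply HJ. exact L.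
Qed.
End Comp.

Lemma eix_per : eix PI = eix (-PI)%R.
Proof. unfold eix. rewrite cos_neg, sin_neg, sin_PI. f_equal. ring. Qed.

Lemma Ci_neq0 : Ci <> 0.
Proof. intro E. injection E. lra. Qed.

Lemma RInt_pair (g : R -> C) a b :
  (forall x, Rc g x) ->
  RInt (V:=C_R_CompleteNormedModule) g a b =
  (RInt (fun x => fst (g x)) a b, RInt (fun x => snd (g x)) a b).
Proof.
  intros Hc. apply is_RInt_unique.
  apply (is_RInt_fct_extend_pair (U:=R_NormedModule) (V:=R_NormedModule)).
  - apply (RInt_correct (V:=R_CompleteNormedModule)). apply (ex_RInt_continuous (V:=R_CompleteNormedModule)).
    intros; apply Rc_cont_fst; auto.
  - apply (RInt_correct (V:=R_CompleteNormedModule)). apply (ex_RInt_continuous (V:=R_CompleteNormedModule)).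
    intros; apply Rc_cont_snd; auto.
Qed.

Lemma cauchy_path U f (gm gm' : R -> C) l1 l2 :
  Hol U f -> (forall x, RD gm x (gm' x)) -> (forall x, Rc gm' x) -> (forall x, gm x <> 0) ->
  (forall x p, U (gm x * eix p)) ->
  RInt (V:=C_R_CompleteNormedModule) (fun p => f (gm l1 * eix p)) (-PI)%R PI =
  RInt (V:=C_R_CompleteNormedModule) (fun p => f (gm l2 * eix p)) (-PI)%R PI.
Proof.
  intros [f' Hf] Hg Hg' Hnz HU.
  set (h := fun u v => f (gm u * eix v)).
  set (D := fun u v => gm' u * eix v * f' (gm u * eix v)).
  set (c := fun u => gm' u / (Ci * gm u)).
  assert (CDf : forall u v, CD f (gm u * eix v) (f' (gm u * eix v))).
  { intros u v. apply is_derive_CD. apply (Hf _ (HU u v)). }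
  assert (HD : forall u v, RD (fun s => h s v) u (D u v)).
  { intros u v. unfold h, D. apply (RD_comp f (fun s => gm s * eix v)). apply CDf.
    apply RD_mulc. apply Hg. }
  assert (Hh : forall u v, RD (fun s => h u s) v (gm u * (Ci * eix v) * f' (gm u * eix v))).
  { intros u v. unfold h. apply (RD_comp f (fun s => gm u * eix s)). apply CDf.
    apply RD_cmul. apply RD_eix. }
  assert (HDv : forall u v, RD (fun s => c u * h u s) v (D u v)).
  { intros u v. replace (D u v) with (c u * (gm u * (Ci * eix v) * f' (gm u * eix v))).
    apply RD_cmul. apply Hh. unfold c, D. field. split. apply Hnz. apply Ci_neq0. }
  assert (HRc : forall u v, Rc (fun s => h u s) v) by (intros; eapply RD_Rc; apply Hh).
  assert (Reix : forall v, Rc eix v) by (intros; eapply RD_Rc; apply RD_eix).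
  assert (HC2 : forall u v, Cc2 D u v).
  { intros u v. unfold D.
    apply (Cc2_mult (fun u v => gm' u * eix v) (fun u v => f' (gm u * eix v))).
    apply (Cc2_mult (fun u v => gm' u) (fun u v => eix v)). apply Cc2_u; auto. apply Cc2_v; auto.
    apply (Cc2_compC f' (fun u v => gm u * eix v)). apply continuous_Cc. apply (Hf _ (HU u v)).
    apply (Cc2_mult (fun u v => gm u) (fun u v => eix v)). apply Cc2_u. eapply RD_Rc; apply Hg. apply Cc2_v; auto. }
  assert (Hper : forall u, h u PI = h u (-PI)%R) by (intros; unfold h; rewrite eix_per; auto).
  change (RInt (V:=C_R_CompleteNormedModule) (h l1) (-PI)%R PI = RInt (V:=C_R_CompleteNormedModule) (h l2) (-PI)%R PI).
  rewrite !RInt_pair by auto. f_equal.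
  - apply (comp_const fst) with (D := D) (c := c); auto.
    + intros; apply RD_to_fst; auto.
    + intros; apply Cc2_fst; auto.
    + intros; apply Rc_cont_fst; auto.
  - apply (comp_const snd) with (D := D) (c := c); auto.
    + intros; apply RD_to_snd; auto.
    + intros; apply Cc2_snd; auto.
    + intros; apply Rc_cont_snd; auto.
Qed.

Lemma Cmod_eix p : Cmod (eix p) = 1%R.
Proof.
  unfold eix, Cmod. cbn [fst snd]. replace (cos p ^ 2 + sin p ^ 2)%R with 1%R. apply sqrt_1. rewrite <- (sin2_cos2 p). unfold Rsqr. ring.
Qed.

Lemma eix_neq0 p : eix p <> 0.
Proof. intro E. assert (H := Cmod_eix p). rewrite E, Cmod_0 in H. lra. Qed.

Lemma eix_0 : eix 0 = 1.
Proof. unfold eix. rewrite cos_0, sin_0. reflexivity. Qed.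

Lemma eix_opp p : eix (- p)%R = / eix p.
Proof.
  assert (H : eix (- p)%R * eix p = 1).
  { unfold eix. rewrite cos_neg, sin_neg. unfold Cmult, RtoC; cbn [fst snd]. f_equal.
    rewrite <- (sin2_cos2 p). unfold Rsqr. ring. ring. }
  rewrite <- (Cmult_1_l (/ eix p)), <- H. field. apply eix_neq0.
Qed.

Lemma Rc_of_real (g : R -> C) x : continuous (fun s => fst (g s)) x -> continuous (fun s => snd (g s)) x -> Rc g x.
Proof.
  intros H1 H2 eps He.
  destruct (proj1 (filterlim_locally _ _) H1 (mkposreal (eps/2) ltac:(lra))) as [d1 A1].
  destruct (proj1 (filterlim_locally _ _) H2 (mkposreal (eps/2) ltac:(lra))) as [d2 A2].
  exists (Rmin d1 d2). split. apply Rmin_pos; apply cond_pos. intros s Hs.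
  specialize (A1 s ltac:(eapply Rlt_le_trans; [exact Hs|apply Rmin_l])).
  specialize (A2 s ltac:(eapply Rlt_le_trans; [exact Hs|apply Rmin_r])).
  change (Rabs (fst (g s) - fst (g x)) < eps / 2)%R in A1.
  change (Rabs (snd (g s) - snd (g x)) < eps / 2)%R in A2.
  eapply Rle_lt_trans. apply Cmod_le_sum.
  replace (fst (g s - g x)) with (fst (g s) - fst (g x))%R by (destruct (g s), (g x); simpl; ring).
  replace (snd (g s - g x)) with (snd (g s) - snd (g x))%R by (destruct (g s), (g x); simpl; ring).
  lra.
Qed.

Lemma unit_angle (w : C) : Cmod w = 1%R -> exists al, eix al = w.
Proof.
  intros Hw. destruct w as [w1 w2].
  assert (Hs : (w1 * w1 + w2 * w2 = 1)%R).
  { unfold Cmod in Hw; cbn [fst snd] in Hw. rewrite <- sqrt_1 in Hw. apply sqrt_inj in Hw.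
    nra. nra. lra. }
  assert (Hb : (-1 <= w1 <= 1)%R) by nra.
  assert (Hsq : sqrt (1 - w1²) = Rabs w2).
  { rewrite <- sqrt_Rsqr_abs. f_equal. unfold Rsqr. lra. }
  destruct (Rle_dec 0 w2) as [P|P].
  - exists (acos w1). unfold eix. rewrite cos_acos, sin_acos, Hsq, Rabs_pos_eq; auto.
  - exists (- acos w1)%R. unfold eix. rewrite cos_neg, sin_neg, cos_acos, sin_acos, Hsq, Rabs_left; auto.
    f_equal. ring. lra.
Qed.

Lemma RInt_refl (g : R -> C) I :
  is_RInt (V:=C_R_CompleteNormedModule) g (-PI)%R PI I ->
  RInt (V:=C_R_CompleteNormedModule) (fun x => g (- x)%R) (-PI)%R PI = I.
Proof.
  intros H. apply is_RInt_unique.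
  apply is_RInt_swap in H.
  assert (H2 := is_RInt_comp_opp (V:=C_R_CompleteNormedModule) g (-PI)%R PI (opp I)).
  rewrite Ropp_involutive in H2. specialize (H2 H).
  apply is_RInt_opp in H2.
  rewrite opp_opp in H2.
  eapply is_RInt_ext. 2: exact H2. intros x _. simpl. apply opp_opp.
Qed.

Section Main.
Variables (q : C) (a b c d : list C) (sigma tau : R) (t : C).
Hypothesis Hq1 : (Cmod q < 1)%R.
Hypothesis Ht : t <> 0.

Definition phi1 (x : C) := / x.
Definition phi2 (x : C) := t * x.
Definition FN n x := PN q b phi1 n x * PN q a phi2 n x / (PN q d phi1 n x * PN q c phi2 n x).
Definition Finf x := qpochL b (/ x) q * qpochL a (t * x) q / (qpochL d (/ x) q * qpochL c (t * x) q).

Definition UR (r : R) := (0 < r)%R /\ (forall dl, In dl d -> (Cmod dl < r)%R) /\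
  (forall ck, In ck c -> (Cmod t * Cmod ck * r < 1)%R).
Definition Ux (x : C) := UR (Cmod x).

Lemma UR_between r1 r2 r : UR r1 -> UR r2 -> (Rmin r1 r2 <= r <= Rmax r1 r2)%R -> UR r.
Proof.
  intros [A1 [B1 C1]] [A2 [B2 C2]] [L1 L2].
  assert (M1 : (Rmin r1 r2 = r1 \/ Rmin r1 r2 = r2)%R) by (unfold Rmin; destruct (Rle_dec r1 r2); auto).
  assert (M2 : (Rmax r1 r2 = r1 \/ Rmax r1 r2 = r2)%R) by (unfold Rmax; destruct (Rle_dec r1 r2); auto).
  split; [|split].
  - destruct M1 as [E|E]; rewrite E in L1; lra.
  - intros dl Hd. specialize (B1 dl Hd). specialize (B2 dl Hd). destruct M1 as [E|E]; rewrite E in L1; lra.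
  - intros ck Hc. specialize (C1 ck Hc). specialize (C2 ck Hc).
    assert (P : (0 <= Cmod t * Cmod ck)%R) by (apply Rmult_le_pos; apply Cmod_ge_0).
    destruct M2 as [E|E]; rewrite E in L2; nra.
Qed.

Lemma Ux_nz x : Ux x -> x <> 0.
Proof. intros [H _] E. rewrite E, Cmod_0 in H. lra. Qed.

Lemma Hol_FN n : Hol Ux (FN n).
Proof.
  assert (H1 : Hol Ux phi1). { apply Hol_inv. apply Hol_id. apply Ux_nz. }
  assert (H2 : Hol Ux phi2). { apply (Hol_mult Ux (fun _ => t) (fun x => x)). apply Hol_const. apply Hol_id. }
  unfold FN. apply (Hol_mult Ux (fun x => PN q b phi1 n x * PN q a phi2 n x) (fun x => / (PN q d phi1 n x * PN q c phi2 n x))).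
  - apply (Hol_mult Ux (PN q b phi1 n) (PN q a phi2 n)); apply Hol_PN; auto.
  - apply (Hol_inv Ux (fun x => PN q d phi1 n x * PN q c phi2 n x)).
    apply (Hol_mult Ux (PN q d phi1 n) (PN q c phi2 n)); apply Hol_PN; auto.
    intros z Hz. assert (Hz0 := Ux_nz z Hz). destruct Hz as [P [Bd Bc]].
    apply Cmult_neq_0; apply PN_nz; auto; intros ui Hi.
    + unfold phi1. rewrite Cmod_mult, Cmod_inv by auto. specialize (Bd ui Hi).
      apply (Rmult_lt_reg_r (Cmod z)); auto. rewrite Rmult_assoc, Rinv_l by lra. lra.
    + unfold phi2. rewrite !Cmod_mult. specialize (Bc ui Hi). nra.
Qed.

Lemma UCB_FN s : UR (Cmod s) -> UCB (fun x => Cmod x = Cmod s) FN Finf.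
Proof.
  intros [P [Bd Bc]].
  set (S := fun x : C => Cmod x = Cmod s).
  assert (K1 : forall x, S x -> (Cmod (phi1 x) <= / Cmod s)%R).
  { intros x Hx. unfold phi1. rewrite Cmod_inv. rewrite Hx; lra. apply Cmod_gt_0. rewrite Hx; lra. }
  assert (K2 : forall x, S x -> (Cmod (phi2 x) <= Cmod t * Cmod s)%R).
  { intros x Hx. unfold phi2. rewrite Cmod_mult, Hx. lra. }
  assert (K2' : forall x, S x -> Cmod (phi2 x) = (Cmod t * Cmod s)%R) by (intros x Hx; unfold phi2; rewrite Cmod_mult, Hx; auto).
  apply (UCB_mult S (fun n x => PN q b phi1 n x * PN q a phi2 n x) (fun x => qpochL b (phi1 x) q * qpochL a (phi2 x) q)
    (fun n x => / (PN q d phi1 n x * PN q c phi2 n x)) (fun x => / (qpochL d (phi1 x) q * qpochL c (phi2 x) q))).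
  - apply (UCB_mult S (PN q b phi1) (fun x => qpochL b (phi1 x) q) (PN q a phi2) (fun x => qpochL a (phi2 x) q)).
    apply UCB_PN with (Kp := (/ Cmod s)%R); auto.
    apply UCB_PN with (Kp := (Cmod t * Cmod s)%R); auto.
  - apply UCB_inv.
    + apply (UCB_mult S (PN q d phi1) (fun x => qpochL d (phi1 x) q) (PN q c phi2) (fun x => qpochL c (phi2 x) q)).
      apply UCB_PN with (Kp := (/ Cmod s)%R); auto.
      apply UCB_PN with (Kp := (Cmod t * Cmod s)%R); auto.
    + apply (LB_mult S (PN q d phi1) (fun x => qpochL d (phi1 x) q) (PN q c phi2) (fun x => qpochL c (phi2 x) q)).
      * apply LB_PN; auto. intros ui Hi. exists (Cmod ui / Cmod s)%R. split.
        { specialize (Bd ui Hi). apply (Rmult_lt_reg_r (Cmod s)); auto. unfold Rdiv. rewrite Rmult_assoc, Rinv_l by lra. lra. }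
        intros x Hx. rewrite Cmod_mult. unfold Rdiv. apply Rmult_le_compat_l. apply Cmod_ge_0. auto.
      * apply LB_PN; auto. intros ui Hi. exists (Cmod t * Cmod ui * Cmod s)%R. split. auto.
        intros x Hx. rewrite Cmod_mult, (K2' x Hx). right. ring.
Qed.

Lemma Rc_Hol U f s : Hol U f -> (forall p, U (s * eix p)) -> forall p, Rc (fun p => f (s * eix p)) p.
Proof.
  intros [f' Hf] HU p. eapply RD_Rc.
  apply (RD_comp f (fun p => s * eix p)). apply is_derive_CD. apply (Hf _ (HU p)).
  apply RD_cmul. apply RD_eix.
Qed.

Lemma ex_RInt_Rc (g : R -> C) a0 b0 : (forall x, Rc g x) -> ex_RInt (V:=C_R_CompleteNormedModule) g a0 b0.
Proof.
  intros H. eexists. apply (RInt_correct (V:=C_R_CompleteNormedModule)).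
  apply (ex_RInt_fct_extend_pair (U:=R_NormedModule) (V:=R_NormedModule)).
  apply (ex_RInt_continuous (V:=R_CompleteNormedModule)). intros; apply Rc_cont_fst; auto.
  apply (ex_RInt_continuous (V:=R_CompleteNormedModule)). intros; apply Rc_cont_snd; auto.
Qed.

Lemma Ux_circ s p : UR (Cmod s) -> Ux (s * eix p).
Proof. intros H. unfold Ux. rewrite Cmod_mult, Cmod_eix, Rmult_1_r. auto. Qed.

Lemma lim_FN s : UR (Cmod s) -> exists If,
  filterlim (fun n => RInt (V:=C_R_CompleteNormedModule) (fun p => FN n (s * eix p)) (-PI)%R PI) eventually (locally If) /\
  is_RInt (V:=C_R_CompleteNormedModule) (fun p => Finf (s * eix p)) (-PI)%R PI If.
Proof.
  intros Hs.
  apply (filterlim_RInt (V:=C_R_CompleteNormedModule) (fun n p => FN n (s * eix p)) (-PI)%R PI eventually eventually_filter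
     (fun p => Finf (s * eix p)) (fun n => RInt (V:=C_R_CompleteNormedModule) (fun p => FN n (s * eix p)) (-PI)%R PI)).
  - intros n. apply (RInt_correct (V:=C_R_CompleteNormedModule)). apply ex_RInt_Rc.
    apply (Rc_Hol Ux). apply Hol_FN. intros; apply Ux_circ; auto.
  - apply (proj2 (filterlim_locally (U := fct_UniformSpace R C_R_CompleteNormedModule) _ _)). intros eps.
    destruct (UCB_FN s Hs) as [_ Hu]. destruct (Hu eps (cond_pos eps)) as [N HN].
    exists N. intros n Hn p. apply Cmod_ball.
    replace (FN n (s * eix p) - Finf (s * eix p)) with (FN n (s * eix p) - Finf (s * eix p)) by reflexivity.
    apply HN; auto. rewrite Cmod_mult, Cmod_eix. ring.
Qed.

Lemma UR_circ_R r : UR r -> UR (Cmod (RtoC r)).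
Proof. intros H. rewrite Cmod_R, Rabs_pos_eq; auto. destruct H; lra. Qed.

Lemma path1 n r1 r2 : UR r1 -> UR r2 ->
  RInt (V:=C_R_CompleteNormedModule) (fun p => FN n (RtoC r1 * eix p)) (-PI)%R PI =
  RInt (V:=C_R_CompleteNormedModule) (fun p => FN n (RtoC r2 * eix p)) (-PI)%R PI.
Proof.
  intros H1 H2.
  set (g := fun l => RtoC (r1 + (r2 - r1) * sin l ^ 2)%R).
  set (g' := fun l => RtoC ((r2 - r1) * (2 * sin l * cos l))%R).
  assert (Hr : forall l, (Rmin r1 r2 <= r1 + (r2 - r1) * sin l ^ 2 <= Rmax r1 r2)%R).
  { intros l. assert (A0 : (0 <= sin l ^ 2)%R) by apply pow2_ge_0.
    assert (A1 : (sin l ^ 2 <= 1)%R).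
    { assert (X := sin2_cos2 l). unfold Rsqr in X. assert (Y := pow2_ge_0 (cos l)). simpl in *. nra. }
    set (S := (sin l ^ 2)%R) in *.
    unfold Rmin, Rmax. destruct (Rle_dec r1 r2); split; nra. }
  assert (Hpos : forall l, (0 < r1 + (r2 - r1) * sin l ^ 2)%R).
  { intros l. destruct (Hr l) as [A _]. destruct H1 as [P1 _], H2 as [P2 _].
    unfold Rmin in A. destruct (Rle_dec r1 r2); lra. }
  assert (E := cauchy_path Ux (FN n) g g' 0%R (PI / 2)%R (Hol_FN n)).
  assert (G0 : g 0%R = RtoC r1). { unfold g. rewrite sin_0. f_equal. ring. }
  assert (G1 : g (PI / 2)%R = RtoC r2). { unfold g. rewrite sin_PI2. f_equal. ring. }
  rewrite G0, G1 in E.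
  apply E; clear E.
  - intros x. apply RD_of_real.
    + unfold g, g'. simpl. auto_derive. auto. ring.
    + unfold g, g'. simpl. apply (is_derive_const (K:=R_AbsRing) (V:=R_NormedModule) 0%R x).
  - intros x. apply Rc_of_real.
    + apply (ex_derive_continuous (K:=R_AbsRing) (V:=R_NormedModule)). unfold g'; simpl. auto_derive. auto.
    + unfold g'; simpl. apply continuous_const.
  - intros x. unfold g. intro E. apply (f_equal fst) in E. simpl in E. specialize (Hpos x). lra.
  - intros x p. unfold Ux. rewrite Cmod_mult, Cmod_eix, Rmult_1_r. unfold g. rewrite Cmod_R, Rabs_pos_eq.
    apply (UR_between r1 r2); auto. apply Rlt_le, Hpos.
Qed.

Lemma path2 n r2 al : UR r2 ->
  RInt (V:=C_R_CompleteNormedModule) (fun p => FN n (RtoC r2 * eix p)) (-PI)%R PI =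
  RInt (V:=C_R_CompleteNormedModule) (fun p => FN n (RtoC r2 * eix al * eix p)) (-PI)%R PI.
Proof.
  intros H2.
  assert (E := cauchy_path Ux (FN n) (fun l => RtoC r2 * eix l) (fun l => RtoC r2 * (Ci * eix l)) 0%R al (Hol_FN n)).
  cbv beta in E. rewrite eix_0, Cmult_1_r in E. apply E; clear E.
  - intros x. apply RD_cmul. apply RD_eix.
  - intros x. eapply RD_Rc. apply RD_cmul. apply RD_cmul. apply RD_eix.
  - intros x. apply Cmult_neq_0. intro E. apply (f_equal fst) in E. simpl in E. destruct H2; lra. apply eix_neq0.
  - intros x p. unfold Ux. rewrite !Cmod_mult, !Cmod_eix, !Rmult_1_r, Cmod_R, Rabs_pos_eq. auto. destruct H2; lra.
Qed.

Lemma main_is r1 r2 al : UR r1 -> UR r2 -> exists If,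
  is_RInt (V:=C_R_CompleteNormedModule) (fun p => Finf (RtoC r1 * eix p)) (-PI)%R PI If /\
  is_RInt (V:=C_R_CompleteNormedModule) (fun p => Finf (RtoC r2 * eix al * eix p)) (-PI)%R PI If.
Proof.
  intros H1 H2.
  destruct (lim_FN (RtoC r1) (UR_circ_R r1 H1)) as [I1 [L1 R1]].
  assert (H2' : UR (Cmod (RtoC r2 * eix al))) by (rewrite Cmod_mult, Cmod_eix, Rmult_1_r; apply UR_circ_R; auto).
  destruct (lim_FN (RtoC r2 * eix al) H2') as [I2 [L2 R2]].
  assert (L1' : filterlim (fun n => RInt (V:=C_R_CompleteNormedModule) (fun p => FN n (RtoC r2 * eix al * eix p)) (-PI)%R PI) eventually (locally I1)).
  { apply (filterlim_ext (fun n => RInt (V:=C_R_CompleteNormedModule) (fun p => FN n (RtoC r1 * eix p)) (-PI)%R PI)).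
    intros n. rewrite (path1 n r1 r2 H1 H2). apply path2. exact H2. exact L1. }
  assert (E : I2 = I1).
  { exact (filterlim_locally_unique (V:=C_R_NormedModule) _ I2 I1 L2 L1'). }
  exists I1. split. exact R1. rewrite <- E. exact R2.
Qed.
End Main.

Theorem lemma2p13 (q : C) (a b c d : list C) (sigma tau : R) (t : C) :
  (0 < Cmod q)%R -> (Cmod q < 1)%R ->
  (0 < length a + length b + length c + length d)%nat ->
  (0 < sigma)%R -> (0 < tau)%R -> t <> 0 ->
  (forall bj dl, In bj b -> In dl d -> (Cmod bj < Cmod dl)%R) ->
  (forall dl, In dl d -> (Cmod dl < Rmin (tau / Cmod t) (1 / sigma))%R) ->
  (forall ai dl, In ai a -> In dl d -> (Cmod (dl * ai) < 1 / Cmod t)%R) ->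
  (forall ai ck, In ai a -> In ck c -> (Cmod ai < Cmod ck)%R) ->
  (forall ck, In ck c -> (Cmod ck < Rmin (sigma / Cmod t) (1 / tau))%R) ->
  RInt (V := C_R_CompleteNormedModule)
    (fun psi : R =>
       (qpochL b (RtoC sigma / eix psi) q * qpochL a (t * eix psi / RtoC sigma) q)
       / (qpochL d (RtoC sigma / eix psi) q * qpochL c (t * eix psi / RtoC sigma) q))
    (- PI) PI
  =
  RInt (V := C_R_CompleteNormedModule)
    (fun eta : R =>
       (qpochL a (RtoC tau / eix eta) q * qpochL b (t * eix eta / RtoC tau) q)
       / (qpochL c (RtoC tau / eix eta) q * qpochL d (t * eix eta / RtoC tau) q))
    (- PI) PI.
Proof.
  intros Hq0 Hq1 _ Hs Htau Ht _ Hd _ _ Hc.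
  assert (Htm : (0 < Cmod t)%R) by exact (proj1 (Cmod_gt_0 t) Ht).
  set (r1 := (/ sigma)%R). set (r2 := (tau / Cmod t)%R).
  assert (U1 : UR c d t r1).
  { split; [|split].
    - unfold r1. apply Rinv_0_lt_compat; auto.
    - intros dl Hdl. specialize (Hd dl Hdl). eapply Rlt_le_trans. exact Hd.
      eapply Rle_trans. apply Rmin_r. unfold r1. right. unfold Rdiv. ring.
    - intros ck Hck. specialize (Hc ck Hck).
      assert (A : (Cmod ck < sigma / Cmod t)%R) by (eapply Rlt_le_trans; [exact Hc|apply Rmin_l]).
      assert (B : (Cmod t * Cmod ck < sigma)%R).
      { apply (Rmult_lt_reg_l (/ Cmod t)). apply Rinv_0_lt_compat; auto.
        rewrite <- Rmult_assoc, Rinv_l by lra. replace (/ Cmod t * sigma)%R with (sigma / Cmod t)%R by (unfold Rdiv; ring). lra. }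
      unfold r1. apply (Rmult_lt_reg_r sigma); auto. rewrite Rmult_assoc, Rinv_l by lra. lra. }
  assert (U2 : UR c d t r2).
  { split; [|split].
    - unfold r2. apply Rdiv_lt_0_compat; auto.
    - intros dl Hdl. specialize (Hd dl Hdl). eapply Rlt_le_trans. exact Hd. apply Rmin_l.
    - intros ck Hck. specialize (Hc ck Hck).
      assert (A : (Cmod ck < 1 / tau)%R) by (eapply Rlt_le_trans; [exact Hc|apply Rmin_r]).
      unfold r2. replace (Cmod t * Cmod ck * (tau / Cmod t))%R with (Cmod ck * tau)%R by (field; lra).
      apply (Rmult_lt_reg_r (/ tau)). apply Rinv_0_lt_compat; auto.
      rewrite Rmult_assoc, Rinv_r by lra. replace (1 * / tau)%R with (1 / tau)%R by (unfold Rdiv; ring). lra. }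
  assert (Hw : Cmod (Cconj t / RtoC (Cmod t)) = 1%R).
  { assert (Ctm : RtoC (Cmod t) <> 0) by (intro E'; apply (f_equal fst) in E'; simpl in E'; lra).
    rewrite Cmod_div by exact Ctm. rewrite Cmod_conj, Cmod_R, Rabs_pos_eq by lra. field. lra. }
  destruct (unit_angle _ Hw) as [al Hal].
  assert (S2 : RtoC r2 * eix al = RtoC tau / t).
  { rewrite Hal. unfold r2.
    assert (E := Cmod2_conj t).
    assert (Ctm : RtoC (Cmod t) <> 0) by (intro E'; apply (f_equal fst) in E'; simpl in E'; lra).
    rewrite RtoC_div by lra.
    assert (Cc : Cconj t = RtoC (Cmod t ^ 2) / t). { rewrite E. field. exact Ht. }
    rewrite Cc, RtoC_pow. field. split; auto. }
  destruct (main_is q a b c d t Hq1 r1 r2 al U1 U2) as [If [I1 I2]].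
  rewrite S2 in I2.
  transitivity If.
  - apply is_RInt_unique. eapply is_RInt_ext. 2: exact I1.
    intros psi _. unfold Finf.
    assert (Ep := eix_neq0 psi).
    assert (Es : RtoC sigma <> 0) by (intro E'; apply (f_equal fst) in E'; simpl in E'; lra).
    replace (/ (RtoC r1 * eix psi)) with (RtoC sigma / eix psi).
    replace (t * (RtoC r1 * eix psi)) with (t * eix psi / RtoC sigma). reflexivity.
    unfold r1. rewrite RtoC_inv by lra. field. auto.
    unfold r1. rewrite RtoC_inv by lra. field. auto.
  - symmetry.
    transitivity (RInt (V:=C_R_CompleteNormedModule) (fun eta => Finf q a b c d t (RtoC tau / t * eix (- eta)%R)) (-PI)%R PI).
    + apply RInt_ext.
      intros eta _. unfold Finf. rewrite eix_opp.
      assert (Ep := eix_neq0 eta).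
      assert (Es : RtoC tau <> 0) by (intro E'; apply (f_equal fst) in E'; simpl in E'; lra).
      replace (/ (RtoC tau / t * / eix eta)) with (t * eix eta / RtoC tau) by (field; auto).
      replace (t * (RtoC tau / t * / eix eta)) with (RtoC tau / eix eta) by (field; auto).
      rewrite (Cmult_comm (qpochL a _ q)), (Cmult_comm (qpochL c _ q)). reflexivity.
    + apply (RInt_refl (fun p => Finf q a b c d t (RtoC tau / t * eix p))). exact I2.
Qed.
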